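(* Let $k(\bm{x},\bm{x}')=\kappa(\|\bm{x}-\bm{x}'\|)$ be a symmetric positive semidefinite isotropic kernel on $\mathbb{R}^d$ with $\kappa:[0,\infty)\to\mathbb{R}$ non-increasing. Let $\sigma_n^2>0$, let $\mathbb{D}_N^x=\{\bm{x}^{(i)}\}_{i=1}^N$ be an input training data set with GP posterior variance $\sigma_N^2(\cdot)$, and for $\rho>0$ let $\mathbb{B}_\rho(\bm{x})=\{\bm{x}'\in\mathbb{D}_N^x:\|\bm{x}'-\bm{x}\|\le\rho\}$. Then for every $\bm{x}$ and every $\rho>0$ with $|\mathbb{B}_\rho(\bm{x})|\ge1$ and $\kappa(\rho)\ge0$, $$\sigma_N^2(\bm{x})\le\kappa(0)-\frac{\kappa(\rho)^2}{\kappa(0)+\frac{\sigma_n^2}{|\mathbb{B}_\rho(\bm{x})|}}.$$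
   Context: Gaussian process posterior variance: given a kernel $k$, noise variance $\sigma_n^2>0$ and training inputs $\bm{x}^{(1)},\dots,\bm{x}^{(N)}$, define $K_{N,ij}=k(\bm{x}^{(i)},\bm{x}^{(j)})$, $k_{N,i}(\bm{x})=k(\bm{x},\bm{x}^{(i)})$, $\bm{A}_N=\bm{K}_N+\sigma_n^2\bm{I}_N$, and $\sigma_N^2(\bm{x})=k(\bm{x},\bm{x})-\bm{k}_N(\bm{x})^T\bm{A}_N^{-1}\bm{k}_N(\bm{x})$. $|\cdot|$ denotes cardinality (training points counted with multiplicity). *)

(* Defs.v *)
(* the statement is purely algebraic/order-theoretic, so we
   state it over an arbitrary real closed field R (this includes the reals). *)
From HB Require Import structures.
From mathcomp Require Import all_boot all_order all_algebra.
Set Implicit Arguments. Unset Strict Implicit. Unset Printing Implicit Defensive.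
Import Order.TTheory GRing.Theory Num.Theory.
Local Open Scope ring_scope.

Definition enorm (R : rcfType) (d : nat) (x : 'rV[R]_d) : R :=
  Num.sqrt (\sum_(i < d) x 0 i ^+ 2).

Definition iso_kernel (R : rcfType) (d : nat) (kappa : R -> R)
  (x x' : 'rV[R]_d) : R := kappa (enorm (x - x')).

Definition psd_kernel (R : rcfType) (d : nat) (k : 'rV[R]_d -> 'rV[R]_d -> R) : Prop :=
  forall (n : nat) (y : 'I_n -> 'rV[R]_d) (c : 'I_n -> R),
    0 <= \sum_(i < n) \sum_(j < n) c i * c j * k (y i) (y j).

Definition symmetric_kernel (R : rcfType) (d : nat) (k : 'rV[R]_d -> 'rV[R]_d -> R) : Prop :=
  forall x x', k x x' = k x' x.

Definition nonincreasing_on_nonneg (R : rcfType) (kappa : R -> R) : Prop :=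
  forall a b : R, 0 <= a -> a <= b -> kappa b <= kappa a.

Definition gram (R : rcfType) (d N : nat) (k : 'rV[R]_d -> 'rV[R]_d -> R)
  (X : 'I_N -> 'rV[R]_d) : 'M[R]_N := \matrix_(i, j) k (X i) (X j).

Definition kvec (R : rcfType) (d N : nat) (k : 'rV[R]_d -> 'rV[R]_d -> R)
  (X : 'I_N -> 'rV[R]_d) (x : 'rV[R]_d) : 'rV[R]_N := \row_i k x (X i).

Definition post_var (R : rcfType) (d N : nat) (k : 'rV[R]_d -> 'rV[R]_d -> R)
  (sn2 : R) (X : 'I_N -> 'rV[R]_d) (x : 'rV[R]_d) : R :=
  k x x - (kvec k X x *m invmx (gram k X + sn2%:M) *m (kvec k X x)^T) 0 0.

(* |B_rho(x)|: number of training points (with multiplicity) within rho of x. *)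
Definition ball_card (R : rcfType) (d N : nat) (X : 'I_N -> 'rV[R]_d)
  (x : 'rV[R]_d) (rho : R) : nat :=
  #|[set i : 'I_N | enorm (X i - x) <= rho]|.

(* Main.v *)
Require Import Defs.
From HB Require Import structures.
From mathcomp Require Import all_boot all_order all_algebra.
From mathcomp Require Import ring lra.
Import Order.TTheory GRing.Theory Num.Theory.
Local Open Scope ring_scope.

Lemma Qexp (R : comNzRingType) (N : nat) (M : 'M[R]_N) (u : 'rV[R]_N) :
  (u *m M *m u^T) 0 0 = \sum_i \sum_j u 0 i * u 0 j * M i j.
Proof.
rewrite mxE; under eq_bigr => j _ do rewrite !mxE big_distrl /=.
rewrite exchange_big /=; apply: eq_bigr => i _; apply: eq_bigr => j _.
by rewrite mulrAC.
Qed.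

Lemma key (R : rcfType) (N : nat) (A : 'M[R]_N) (v c : 'rV[R]_N) :
  A^T = A -> A \in unitmx -> (forall u : 'rV[R]_N, 0 <= (u *m A *m u^T) 0 0) ->
  2 * (c *m v^T) 0 0 - (c *m A *m c^T) 0 0 <= (v *m invmx A *m v^T) 0 0.
Proof.
move=> hT hU hP.
set w := v *m invmx A.
have hv : v = w *m A by rewrite /w mulmxKV.
have h1 : w *m v^T = w *m A *m w^T.
  by rewrite {1}hv trmx_mul hT mulmxA.
have h2 : (w *m A *m c^T) 0 0 = (c *m v^T) 0 0.
  rewrite -hv; have -> : (v *m c^T) 0 0 = ((v *m c^T)^T) 0 0 by rewrite [in RHS]mxE.
  by rewrite trmx_mul trmxK.
have h3 : (c *m A *m w^T) 0 0 = (c *m v^T) 0 0.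
  by rewrite -mulmxA -{1}hT -trmx_mul -hv.
have := hP (w - c).
rewrite h1 linearB /= !mulmxBl !mulmxBr !mxE.
rewrite !mxE in h2 h3.
move=> H; lra.
Qed.

Theorem corollary3p1 (R : rcfType) (d : nat) (kappa : R -> R)
  (hpsd : psd_kernel (@iso_kernel R d kappa))
  (hsym : symmetric_kernel (@iso_kernel R d kappa))
  (hmono : nonincreasing_on_nonneg kappa)
  (sn2 : R) (hsn2 : 0 < sn2)
  (N : nat) (X : 'I_N -> 'rV[R]_d)
  (x : 'rV[R]_d) (rho : R) (hrho : 0 < rho)
  (hB : (1 <= ball_card X x rho)%N) (hk : 0 <= kappa rho) :
  post_var (@iso_kernel R d kappa) sn2 X x <=
    kappa 0 - kappa rho ^+ 2 / (kappa 0 + sn2 / (ball_card X x rho)%:R).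
Proof.
set k := iso_kernel kappa.
have enorm_ge0 : forall z : 'rV[R]_d, 0 <= enorm z by move=> z; exact: sqrtr_ge0.
have hk0 : forall y z, k y z <= kappa 0.
  by move=> y z; rewrite /k /iso_kernel; apply: hmono.
have k00 : kappa 0 >= kappa rho by apply: hmono => //; apply: ltW.
have kxx : k x x = kappa 0.
  rewrite /k /iso_kernel /enorm big1 ?sqrtr0 // => i _.
  by rewrite !mxE subrr expr0n.
set K := gram k X.
set A := K + sn2%:M.
set v := kvec k X x.
have QA : forall u : 'rV[R]_N, (u *m A *m u^T) 0 0 =
    (u *m K *m u^T) 0 0 + sn2 * \sum_i u 0 i ^+ 2.
  move=> u; rewrite /A mulmxDr mul_mx_scalar mulmxDl -scalemxAl.
  rewrite [LHS]mxE; congr (_ + _); rewrite mxE; congr (_ * _).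
  rewrite mxE; apply: eq_bigr => i _.
  by rewrite mxE expr2.
have QK : forall u : 'rV[R]_N, (u *m K *m u^T) 0 0 =
    \sum_i \sum_j u 0 i * u 0 j * k (X i) (X j).
  move=> u; rewrite Qexp; apply: eq_bigr => i _; apply: eq_bigr => j _.
  by rewrite /K mxE.
have QKge0 : forall u : 'rV[R]_N, 0 <= (u *m K *m u^T) 0 0.
  by move=> u; rewrite QK; apply: (hpsd N X (fun i => u 0 i)).
have sq_ge0 : forall u : 'rV[R]_N, 0 <= \sum_i u 0 i ^+ 2.
  by move=> u; apply: sumr_ge0 => i _; apply: sqr_ge0.
have QAge0 : forall u : 'rV[R]_N, 0 <= (u *m A *m u^T) 0 0.
  by move=> u; rewrite QA; apply: addr_ge0 => //; apply: mulr_ge0 => //; apply: ltW.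
have AT : A^T = A.
  apply/matrixP => i j; rewrite /A /K !mxE.
  by rewrite /k hsym eq_sym.
have AU : A \in unitmx.
  rewrite unitmxE unitfE; apply/negP => /det0P [u hu0 huA].
  have : (u *m A *m u^T) 0 0 = 0 by rewrite huA mul0mx mxE.
  rewrite QA => h.
  have hs : \sum_i u 0 i ^+ 2 = 0.
    have := QKge0 u; have := sq_ge0 u; move: h; nra.
  move/eqP: hu0; apply; apply/matrixP => i j.
  rewrite (ord1 i) mxE; apply/eqP; rewrite -sqrf_eq0; apply/eqP.
  by apply: (psumr_eq0P (fun i _ => sqr_ge0 (u 0 i)) hs).
set B := [set i : 'I_N | enorm (X i - x) <= rho].
have hm : ball_card X x rho = #|B| by [].
rewrite hm in hB *.
set mr : R := (#|B|)%:R.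
have mr_gt0 : 0 < mr by rewrite /mr ltr0n.
set D := mr * kappa 0 + sn2.
have D_gt0 : 0 < D by rewrite /D; apply: ltr_wpDl => //; apply: mulr_ge0; lra.
set al := kappa rho / D.
have al_ge0 : 0 <= al by apply: divr_ge0 => //; apply: ltW.
set c : 'rV[R]_N := \row_j (if j \in B then al else 0).
have ce : forall j, c 0 j = if j \in B then al else 0 by move=> j; rewrite mxE.
have c_ge0 : forall j, 0 <= c 0 j by move=> j; rewrite ce; case: ifP.
have hsum : forall F : 'I_N -> R, \sum_j (if j \in B then F j else 0) = \sum_(j in B) F j.
  by move=> F; rewrite [RHS]big_mkcond.
have Sc : \sum_j c 0 j = al * mr.
  under eq_bigr do rewrite ce.
  by rewrite hsum sumr_const -mulr_natr.
have Sc2 : \sum_j c 0 j ^+ 2 = al ^+ 2 * mr.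
  under eq_bigr => j _ do rewrite ce (fun_if (fun t => t ^+ 2)) expr0n /=.
  by rewrite hsum sumr_const -mulr_natr.
have Qc : (c *m K *m c^T) 0 0 <= (al * mr) ^+ 2 * kappa 0.
  rewrite QK.
  apply: le_trans (_ : \sum_i \sum_j c 0 i * c 0 j * kappa 0 <= _).
    apply: ler_sum => i _; apply: ler_sum => j _.
    by apply: ler_wpM2l; [apply: mulr_ge0 | apply: hk0].
  rewrite -Sc expr2 big_distrl /= big_distrl /=; rewrite le_eqVlt; apply/orP; left; apply/eqP; apply: eq_bigr => i _.
  rewrite big_distrr big_distrl /=; apply: eq_bigr => j _; by [].
have Cv : al * kappa rho * mr <= (c *m v^T) 0 0.
  rewrite mxE.
  under eq_bigr => j _ do rewrite ce !mxE (fun_if (fun t => t * k x (X j))) mul0r.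
  rewrite hsum.
  apply: le_trans (_ : \sum_(j in B) al * kappa rho <= _).
    by rewrite sumr_const -mulr_natr.
  apply: ler_sum => j; rewrite inE => hj.
  apply: ler_wpM2l => //.
  rewrite /k hsym /iso_kernel; exact: hmono.
have := @key _ _ A v c AT AU QAge0.
rewrite QA Sc2.
rewrite /post_var -/K -/A -/v kxx.
move=> H.
suff E : kappa rho ^+ 2 / (kappa 0 + sn2 / mr) =
   2 * (al * kappa rho * mr) - ((al * mr) ^+ 2 * kappa 0 + sn2 * (al ^+ 2 * mr)).
  rewrite E.
  have : 0 <= sn2 by apply: ltW.
  move: H Cv Qc; set P := (c *m v^T) 0 0; set Q := (c *m K *m c^T) 0 0.
  set I := (v *m invmx A *m v^T) 0 0.
  move=> *; nra.
rewrite /al /D.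
field.
by apply/andP; split; [exact: (lt0r_neq0 D_gt0) | exact: (lt0r_neq0 mr_gt0)].
Qed.
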